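(* Let $(x^*,u^* )$ be a local solution of problem (P) with radius $\delta>0$, for $k=1,2,\dots$ let $(x_k,u_k)$ be a global solution of $(P_k)$, let $\mu_k(t,s):=\frac{\chi_{(t-\tau,t)}(s)\exp(k\,x_k(s))}{\int_{t-\tau}^t\exp(k\,x_k(\hat s))\,\mathrm{d}\hat s}$ (componentwise), and let $\mu\in L^\infty_w(I;\mathcal{M}(I_\tau))^n$ be a weak-$\star$ limit in $(L^1(I;C(I_\tau))^n)^*$ of a subsequence of $(\mu_k)$ satisfying $\mu(t)\in\partial\max x^*_t$ for a.a. $t\in I$. Then $\mu\ge0$ and, for almost all $t\in I$ and all $i=1,\dots,n$, $\|\mu_i(t)\|_{\mathcal{M}(I_\tau)}=1$ and $\operatorname{supp}(\mu_i(t))\subset\operatorname{argmax}_{s\in[t-\tau,t]}x^*_i(s)$.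
   Context: Let $n,m\ge1$, $T>0$, $\tau>0$, $I=[0,T]$, $I_\tau=[-\tau,T]$. For $x\in C(I_\tau;\mathbb{R}^n)$, $t\in I$: $\max x_t:=\max_{s\in[t-\tau,t]}x(s)$ and $\mathrm{LIE}_k(x_t):=\frac1k\log\big(\int_{t-\tau}^t\exp(kx(s))\,\mathrm{d}s\big)$, componentwise. Standing assumptions: $F(x,v,u)=F_0(x,v)+F_1(x,v)u$ with $F_0:\mathbb{R}^n\times\mathbb{R}^n\to\mathbb{R}^n$, $F_1:\mathbb{R}^n\times\mathbb{R}^n\to\mathbb{R}^{n\times m}$ globally Lipschitz and $C^1$; $\phi\in C([-\tau,0];\mathbb{R}^n)$; $U\subset\mathbb{R}^m$ nonempty convex compact; $j:I\times\mathbb{R}^n\times\mathbb{R}^m\to\mathbb{R}$ a nonnegative normal integrand, convex in its third argument, differentiable in its second argument with $j_x$ continuous in the second and third arguments. Feasible controls: $u\in L^\infty(I;\mathbb{R}^m)$, $u(t)\in U$ a.e. Problem (P): minimize $J(x,u)=\int_0^Tj(t,x(t),u(t))\,\mathrm{d}t$ over feasible $u$, $x\in C(I_\tau;\mathbb{R}^n)\cap W^{1,\infty}(I;\mathbb{R}^n)$ solving $x'(t)=F(x(t),\max x_t,u(t))$ a.e. on $(0,T)$, $x=\phi$ on $[-\tau,0]$. Local solution with radius $\delta$: feasible $u^*$ with state $x^*$ and $J(x^*,u^* )\le J(x,u)$ for all feasible $u$ with $\|u-u^*\|_{L^2}\le\delta$. Problem $(P_k)$: minimize $\int_0^Tj(t,x(t),u(t))+\frac12|u(t)-u^*(t)|^2\,\mathrm{d}t$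 over feasible $u$ with $\|u-u^*\|_{L^2}\le\delta$, $x$ solving $x'(t)=F(x(t),\mathrm{LIE}_k(x_t),u(t))$ a.e. on $I$, $x=\phi$ on $[-\tau,0]$. $\mathcal{M}(I_\tau)$: regular signed Borel measures on $I_\tau$ with total variation norm. $L^\infty_w(I;\mathcal{M}(I_\tau))$: equivalence classes of weak-$\star$ measurable $\nu:I\to\mathcal{M}(I_\tau)$ with $|\langle\nu(t),z\rangle|\le c\|z\|_{C(I_\tau)}$ for a.a. $t$, all $z$, some $c\ge0$, identified with the dual of $L^1(I;C(I_\tau))$ via $\langle\nu,z\rangle=\int_0^T\langle\nu(t),z(t)\rangle\,\mathrm{d}t$; $\mu_k$ is identified with $t\mapsto\mu_k(t,s)\,\mathrm{d}s$. $\mu(t)\in\partial\max x^*_t$ means that for each $i$, $\mu_i(t)$ lies in the convex subdifferential of $C(I_\tau)\ni w\mapsto\max_{s\in[t-\tau,t]}w(s)$ at $x^*_i$. $\operatorname{supp}$ is the support of a measure. *)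

(* Defs.v *)
From HB Require Import structures.
From mathcomp Require Import all_boot all_order all_algebra.
From mathcomp Require Import all_classical all_reals all_analysis.
Set Implicit Arguments. Unset Strict Implicit. Unset Printing Implicit Defensive.
Import Order.TTheory GRing.Theory Num.Theory.
Import numFieldNormedType.Exports.
Local Open Scope classical_set_scope.
Local Open Scope ring_scope.

Section OCP_defs.
Context {R : realType}.
Local Notation leb := (@lebesgue_measure R).

Definition II (T : R) : set R := `[0, T].
Definition Itau (tau T : R) : set R := `[- tau, T].
Definition win (tau t : R) : set R := `[t - tau, t].

Definition sqnorm {p : nat} (v : 'rV[R]_p) : R := \sum_(i < p) (v ord0 i) ^+ 2.

Definition maxw {n : nat} (tau : R) (x : R -> 'rV[R]_n) (t : R) : 'rV[R]_n :=
  \row_i sup [set (x s) ord0 i | s in win tau t].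

Definition LIE {n : nat} (k : nat) (tau : R) (x : R -> 'rV[R]_n) (t : R) : 'rV[R]_n :=
  \row_i (k%:R^-1 * ln (\int[leb]_(s in win tau t) expR (k%:R * x s ord0 i))).

Definition Fdyn {n m : nat} (F0 : 'rV[R]_n -> 'rV[R]_n -> 'rV[R]_n)
  (F1 : 'rV[R]_n -> 'rV[R]_n -> 'M[R]_(n, m)) (x v : 'rV[R]_n) (u : 'rV[R]_m) : 'rV[R]_n :=
  F0 x v + (F1 x v *m u^T)^T.

Definition glob_lipschitz {U V : normedModType R} (f : U -> V) :=
  exists L : R, forall p q, `|f p - f q| <= L * `|p - q|.

Definition C1 {U V : normedModType R} (f : U -> V) :=
  (forall p, differentiable f p) /\ (forall v, continuous (fun p => 'd f p v)).

Definition leb_measurable (A : set R) :=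
  exists B N : set R, [/\ measurable B, measurable N, leb N = 0%E &
    (A `\` B) `|` (B `\` A) `<=` N].

(** j normal integrand on I x R^n x R^m (finite valued): lsc in (x,u) for each t
    and L(I) (x) B(R^n x R^m)-measurable *)
Definition normal_integrand {n m : nat} (T : R)
    (j : R -> 'rV[R]_n -> 'rV[R]_m -> R) :=
  (forall t, II T t -> forall a : R,
      open [set p : 'rV[R]_n * 'rV[R]_m | a < j t p.1 p.2]) /\
  (forall c : R,
     <<s [set S | exists (A : set R) (B : set ('rV[R]_n * 'rV[R]_m)),
                   [/\ leb_measurable A, A `<=` II T, open B & S = A `*` B]] >>
       [set q : R * ('rV[R]_n * 'rV[R]_m) | II T q.1 /\ j q.1 q.2.1 q.2.2 <= c]).

Definition jx {n m : nat} (j : R -> 'rV[R]_n -> 'rV[R]_m -> R) (t : R)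
    (x : 'rV[R]_n) (u : 'rV[R]_m) (v : 'rV[R]_n) : R :=
  'd (fun y : 'rV[R]_n => j t y u) x v.

Definition j_assumptions {n m : nat} (T : R) (j : R -> 'rV[R]_n -> 'rV[R]_m -> R) :=
  [/\ (forall t x u, II T t -> 0 <= j t x u),
      normal_integrand T j,
      (forall t x, II T t -> forall (a b : 'rV[R]_m) (l : R), 0 <= l <= 1 ->
          j t x (l *: a + (1 - l) *: b) <= l * j t x a + (1 - l) * j t x b),
      (forall t, II T t -> forall (x : 'rV[R]_n) (u : 'rV[R]_m), differentiable (fun y : 'rV[R]_n => j t y u) x) &
      (forall t, II T t -> forall v : 'rV[R]_n,
          continuous (fun p : 'rV[R]_n * 'rV[R]_m => jx j t p.1 p.2 v))].

Definition U_assumptions {m : nat} (U : set 'rV[R]_m) :=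
  [/\ U !=set0,
      (forall a b (l : R), U a -> U b -> 0 <= l <= 1 -> U (l *: a + (1 - l) *: b)) &
      compact U].

Definition feasible {m : nat} (T : R) (U : set 'rV[R]_m) (u : R -> 'rV[R]_m) :=
  [/\ (forall i, measurable_fun (II T) (fun t => u t ord0 i)),
      (exists C : R, {ae leb, forall t, II T t -> `|u t| <= C}) &
      {ae leb, forall t, II T t -> U (u t)}].

(** x in W^{1,oo}(I;R^n) (continuous representative: Lipschitz on I) *)
Definition W1inf {n : nat} (T : R) (x : R -> 'rV[R]_n) :=
  exists L : R, forall s t, II T s -> II T t -> `|x s - x t| <= L * `|s - t|.

Definition state_eq {n m : nat} (T tau : R)
    (G : (R -> 'rV[R]_n) -> R -> 'rV[R]_n)
    (F0 : 'rV[R]_n -> 'rV[R]_n -> 'rV[R]_n) (F1 : 'rV[R]_n -> 'rV[R]_n -> 'M[R]_(n, m))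
    (phi : R -> 'rV[R]_n) (u : R -> 'rV[R]_m) (x : R -> 'rV[R]_n) :=
  [/\ {within Itau tau T, continuous x}, W1inf T x,
      (forall t, Itau tau 0 t -> x t = phi t) &
      {ae leb, forall t, (`]0, T[%classic : set R) t ->
         derivable x t 1 /\ 'D_1 x t = Fdyn F0 F1 (x t) (G x t) (u t)}].

Definition Jcost {n m : nat} (T : R) (j : R -> 'rV[R]_n -> 'rV[R]_m -> R)
    (x : R -> 'rV[R]_n) (u : R -> 'rV[R]_m) : \bar R :=
  (\int[leb]_(t in II T) (j t (x t) (u t))%:E)%E.

Definition Jkcost {n m : nat} (T : R) (j : R -> 'rV[R]_n -> 'rV[R]_m -> R)
    (us : R -> 'rV[R]_m) (x : R -> 'rV[R]_n) (u : R -> 'rV[R]_m) : \bar R :=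
  (\int[leb]_(t in II T) (j t (x t) (u t) + 2^-1 * sqnorm (u t - us t))%:E)%E.

Definition L2ball {m : nat} (T delta : R) (us u : R -> 'rV[R]_m) :=
  (\int[leb]_(t in II T) (sqnorm (u t - us t))%:E <= (delta ^+ 2)%:E)%E.

Definition local_sol_P {n m : nat} (T tau : R)
    (F0 : 'rV[R]_n -> 'rV[R]_n -> 'rV[R]_n) (F1 : 'rV[R]_n -> 'rV[R]_n -> 'M[R]_(n, m))
    (phi : R -> 'rV[R]_n) (U : set 'rV[R]_m) (j : R -> 'rV[R]_n -> 'rV[R]_m -> R)
    (delta : R) (xs : R -> 'rV[R]_n) (us : R -> 'rV[R]_m) :=
  [/\ feasible T U us, state_eq T tau (maxw tau) F0 F1 phi us xs &
      forall u x, feasible T U u -> L2ball T delta us u ->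
        state_eq T tau (maxw tau) F0 F1 phi u x -> (Jcost T j xs us <= Jcost T j x u)%E].

Definition global_sol_Pk {n m : nat} (T tau : R)
    (F0 : 'rV[R]_n -> 'rV[R]_n -> 'rV[R]_n) (F1 : 'rV[R]_n -> 'rV[R]_n -> 'M[R]_(n, m))
    (phi : R -> 'rV[R]_n) (U : set 'rV[R]_m) (j : R -> 'rV[R]_n -> 'rV[R]_m -> R)
    (delta : R) (us : R -> 'rV[R]_m) (k : nat) (xk : R -> 'rV[R]_n) (uk : R -> 'rV[R]_m) :=
  [/\ feasible T U uk, L2ball T delta us uk, state_eq T tau (LIE k tau) F0 F1 phi uk xk &
      forall u x, feasible T U u -> L2ball T delta us u ->
        state_eq T tau (LIE k tau) F0 F1 phi u x ->
        (Jkcost T j us xk uk <= Jkcost T j us x u)%E].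

(** M(I_tau): finite signed Borel measures on R concentrated on I_tau
    (on the compact metric space I_tau every finite Borel measure is regular) *)
Definition sgnmeas := {charge set (measurableTypeR R) -> \bar R}.

Definition in_M (tau T : R) (nu : sgnmeas) :=
  forall A, measurable A -> A `<=` ~` Itau tau T -> nu A = 0%E.

Lemma hahn_ex (nu : sgnmeas) :
  exists PN : set R * set R, hahn_decomposition nu PN.1 PN.2.
Proof. by have [P [N h]] := Hahn_decomposition nu; exists (P, N). Qed.

Definition hahnPN (nu : sgnmeas) := projT2 (cid (hahn_ex nu)).

Definition jpos (nu : sgnmeas) := jordan_pos (hahnPN nu).
Definition jneg (nu : sgnmeas) := jordan_neg (hahnPN nu).
Definition varM (nu : sgnmeas) := charge_variation (hahnPN nu).

Definition pairM (tau T : R) (nu : sgnmeas) (f : R -> R) : R :=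
  (\int[jpos nu]_(s in Itau tau T) f s) - (\int[jneg nu]_(s in Itau tau T) f s).

Definition tvnorm (tau T : R) (nu : sgnmeas) : R := fine (varM nu (Itau tau T)).

Definition nonnegM (nu : sgnmeas) := forall A, measurable A -> (0 <= nu A)%E.

Definition suppM (nu : sgnmeas) : set R :=
  [set s | forall O : set R, open O -> O s -> (0 < varM nu O)%E].

Definition argmaxw (tau t : R) (y : R -> R) : set R :=
  [set s | win tau t s /\ forall r, win tau t r -> y r <= y s].

Definition supI (tau T : R) (z : R -> R) : R := sup [set `|z s| | s in Itau tau T].

Definition Linf_w {n : nat} (tau T : R) (mu : R -> 'I_n -> sgnmeas) :=
  [/\ (forall t i, II T t -> in_M tau T (mu t i)),
      (forall i (z : R -> R), {within Itau tau T, continuous z} ->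
          measurable_fun (II T) (fun t => pairM tau T (mu t i) z)) &
      (exists c : R, {ae leb, forall t, II T t -> forall i (z : R -> R),
          {within Itau tau T, continuous z} ->
          `|pairM tau T (mu t i) z| <= c * supI tau T z})].

Definition simple_C (tau T : R) (g : R -> R -> R) :=
  exists (N : nat) (A : nat -> set R) (h : nat -> R -> R),
    [/\ (forall l, leb_measurable (A l)),
        (forall l, {within Itau tau T, continuous (h l)}) &
        (forall t s, g t s = \sum_(l < N) \1_(A l) t * h l s)].

Definition strongly_meas (tau T : R) (z : R -> R -> R) :=
  exists g : nat -> R -> R -> R, (forall p, simple_C tau T (g p)) /\
    {ae leb, forall t, II T t ->
       (fun p => supI tau T (fun s => g p t s - z t s)) @ \oo --> 0}.

Definition L1C (tau T : R) (z : R -> R -> R) :=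
  [/\ (forall t, II T t -> {within Itau tau T, continuous (z t)}),
      strongly_meas tau T z &
      (\int[leb]_(t in II T) (supI tau T (z t))%:E < +oo)%E].

Definition muk {n : nat} (tau : R) (k : nat) (xk : R -> 'rV[R]_n) (i : 'I_n) (t s : R) : R :=
  \1_(`]t - tau, t[) s * expR (k%:R * xk s ord0 i) /
    \int[leb]_(r in win tau t) expR (k%:R * xk r ord0 i).

Definition pair_k {n : nat} (tau T : R) (k : nat) (xk : R -> 'rV[R]_n)
    (z : 'I_n -> R -> R -> R) : R :=
  \sum_(i < n) \int[leb]_(t in II T) \int[leb]_(s in Itau tau T) (muk tau k xk i t s * z i t s).

Definition pair_mu {n : nat} (tau T : R) (mu : R -> 'I_n -> sgnmeas)
    (z : 'I_n -> R -> R -> R) : R :=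
  \sum_(i < n) \int[leb]_(t in II T) pairM tau T (mu t i) (z i t).

Definition wstar_limit {n : nat} (tau T : R) (xk : nat -> R -> 'rV[R]_n)
    (phi : nat -> nat) (mu : R -> 'I_n -> sgnmeas) :=
  forall z : 'I_n -> R -> R -> R, (forall i, L1C tau T (z i)) ->
    (fun p => pair_k tau T (phi p) (xk (phi p)) z) @ \oo --> pair_mu tau T mu z.

Definition in_subdiff_max {n : nat} (tau T t : R) (xs : R -> 'rV[R]_n)
    (mu : R -> 'I_n -> sgnmeas) :=
  forall (i : 'I_n) (w : R -> R), {within Itau tau T, continuous w} ->
    sup [set w s | s in win tau t] - sup [set xs s ord0 i | s in win tau t]
      >= pairM tau T (mu t i) (fun s => w s - xs s ord0 i).

End OCP_defs.

(* Main.v *)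
Require Import Defs.
From HB Require Import structures.
From mathcomp Require Import all_boot all_order all_algebra.
From mathcomp Require Import all_classical all_reals all_analysis.
From mathcomp Require Import measurable_realfun.
From mathcomp Require Import lra.
Import Order.TTheory GRing.Theory Num.Theory.
Import numFieldNormedType.Exports.
Local Open Scope classical_set_scope.
Local Open Scope ring_scope.
Section ext.
Context {R : realType}.
Variable m : {finite_measure set (measurableTypeR R) -> \bar R}.
Definition mo : set (ocitv_type R) -> \bar R := m.
Let mo0 : mo set0 = 0%E. Proof. exact: measure0. Qed.
Let mo_ge0 A : (0 <= mo A)%E. Proof. exact: measure_ge0. Qed.
Let mo_ssa : semi_sigma_additive mo.
Proof.
move=> F mF tF mU.
apply: (@measure_semi_sigma_additive _ _ _ m F) => //.
- by move=> i; apply: sub_sigma_algebra; exact: mF.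
- by apply: sub_sigma_algebra.
Qed.
HB.instance Definition _ := isMeasure.Build _ _ _ mo mo0 mo_ge0 mo_ssa.

Lemma m_ext (A : set (measurableTypeR R)) : measurable A -> m A = mu_ext mo A.
Proof.
move=> mA; symmetry.
have := @measure_extension_unique _ (ocitv_type R) R mo _ m _ A mA.
apply.
- exists (fun k : nat => `]- k%:R, k%:R]%classic).
    apply/seteqP; split=> // x _ /=.
    have [k hk] : exists k : nat, `|x| < k%:R.
      exists (Num.trunc `|x|).+1. exact: Num.Theory.truncnS_gt.
    exists k => //=; rewrite in_itv /=; apply/andP; split.
      by rewrite ltrNl (le_lt_trans _ hk) // ler_normr lexx orbT.
    by rewrite ltW // (le_lt_trans _ hk) // ler_norm.
  move=> i; split; first exact: is_ocitv.
  by rewrite /mo ltey_eq fin_num_measure //; apply: sub_sigma_algebra; exact: is_ocitv.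
- by [].
Qed.
End ext.

Lemma le_ext {R : realType} (m1 m2 : {finite_measure set (measurableTypeR R) -> \bar R}) :
  (forall a b : R, (m1 `]a, b]%classic <= m2 `]a, b]%classic)%E) ->
  forall A, measurable A -> (m1 A <= m2 A)%E.
Proof.
move=> h A mA; rewrite (m_ext m1 _ mA) (m_ext m2 _ mA).
apply: le_ereal_inf_tmp => _ [F [mF cF] <-].
apply: (@le_trans _ _ (\sum_(k <oo) mo m1 (F k))%E).
  by apply: ereal_inf_lbound; exists F.
apply: lee_nneseries => [k _ _|k _]; first exact: measure_ge0.
have := mF k; case/ocitvP => [->|[x _ ->]]; first by rewrite !measure0.
exact: h.
Qed.
Lemma Rint_cvg {R : realType} (m : {finite_measure set (measurableTypeR R) -> \bar R})
  (D : set (measurableTypeR R)) (g : nat -> measurableTypeR R -> R) (f : measurableTypeR R -> R) :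
  measurable D -> (forall n, measurable_fun D (g n)) -> measurable_fun D f ->
  (forall x, (fun n => g n x) @ \oo --> f x) -> (forall n x, `|g n x| <= 1) ->
  (fun n => \int[m]_(x in D) g n x) @ \oo --> \int[m]_(x in D) f x.
Proof.
move=> mD mg mf gf g1.
have mg' n := (measurable_EFinP D (g n)).2 (mg n).
have mf' := (measurable_EFinP D f).2 mf.
have i1 : m.-integrable D (EFin \o cst (1:R)) by exact: finite_measure_integrable_cst.
have h1 : {ae m, forall x, D x -> (fun n => (EFin \o g n) x) @ \oo --> (EFin \o f) x}.
  by apply: aeW => x _; apply/cvg_EFin => //=; [exact: nearW | exact: gf].
have h2 : {ae m, forall x n, D x -> (`|(EFin \o g n) x| <= (EFin \o cst (1:R)%R) x)%E}.
  by apply: aeW => x n _ /=; rewrite lee_fin g1.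
have [intf _ cv] := @dominated_convergence _ _ _ m D mD (fun n => EFin \o g n)
   (EFin \o f) (EFin \o cst (1:R)) mg' mf' h1 i1 h2.
rewrite /Rintegral; apply: fine_cvg.
rewrite fineK; last exact: integrable_fin_num.
exact: cv.
Qed.
Section C.
Context {R : realType}.
Definition clamp (y : R) := Num.max 0 (Num.min 1 y).
Lemma clamp_ge0 y : 0 <= clamp y. Proof. by rewrite /clamp le_max lexx. Qed.
Lemma clamp_le1 y : clamp y <= 1. Proof. by rewrite /clamp ge_max ler01 ge_min lexx. Qed.
Lemma clamp_le0 y : y <= 0 -> clamp y = 0.
Proof. by move=> H; apply/le_anti; rewrite clamp_ge0 andbT /clamp ge_max lexx /= ge_min H orbT. Qed.
Lemma clamp_ge1 y : 1 <= y -> clamp y = 1.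
Proof. by move=> H; apply/le_anti; rewrite clamp_le1 /= /clamp le_max le_min lexx H orbT. Qed.
Lemma clamp_cont (f : R -> R) : continuous f -> continuous (fun r => clamp (f r)).
Proof.
move=> cf x.
apply: (@continuous_max _ _ (cst 0) (fun r => Num.min 1 (f r))); first exact: cst_continuous.
apply: (@continuous_min _ _ (cst 1) f); first exact: cst_continuous.
exact: cf.
Qed.
Definition hn (a b : R) (n : nat) (r : R) :=
  clamp (Num.min (n.+1%:R * (r - a)) (1 - n.+1%:R * (r - b))).
Lemma hn_cont a b n : continuous (hn a b n).
Proof.
apply: clamp_cont => x.
apply: (@continuous_min _ _ (fun r => n.+1%:R * (r - a)) (fun r => 1 - n.+1%:R * (r - b))).
  apply: cvgM; first exact: cvg_cst.
  by apply: cvgB; [exact: cvg_id | exact: cvg_cst].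
apply: cvgB; first exact: cvg_cst.
apply: cvgM; first exact: cvg_cst.
by apply: cvgB; [exact: cvg_id | exact: cvg_cst].
Qed.
Definition tent (s e r : R) := clamp (2 - `|r - s| / e).
Lemma tent_cont s e : continuous (tent s e).
Proof.
apply: clamp_cont => x.
apply: cvgB; first exact: cvg_cst.
apply: cvgM; last exact: cvg_cst.
apply: (@continuous_comp _ _ _ (fun r => r - s) Num.norm).
  apply: cvgB; first exact: cvg_id.
  exact: cvg_cst.
exact: norm_continuous.
Qed.
Lemma ev_nat (c : R) : \forall n \near \oo, c <= n.+1%:R.
Proof.
exists (Num.trunc `|c|) => // n /= hn.
apply: (le_trans (ler_norm c)); apply: ltW.
apply: (lt_le_trans (truncnS_gt _)); rewrite ler_nat ltnS //.
Qed.
Lemma hn_cvg a b r : (fun n => hn a b n r) @ \oo --> (\1_(`]a, b]%classic) r : R).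
Proof.
rewrite indicE mem_setE in_itv /=.
have [ra|ar] := leP r a.
  rewrite /=.
  have -> : (fun n => hn a b n r) = cst 0.
    apply/funext => n; apply: clamp_le0; rewrite ge_min; apply/orP; left.
    by rewrite pmulr_rle0 ?ltr0Sn // subr_le0.
  exact: cvg_cst.
have [rb|br] := leP r b.
  have H : \forall n \near \oo, cst 1 n = hn a b n r.
    near=> n; rewrite /= /hn clamp_ge1 // le_min; apply/andP; split.
      rewrite -ler_pdivrMr ?subr_gt0 // mul1r.
      by near: n; exact: ev_nat.
    by rewrite lerDl oppr_ge0 pmulr_rle0 ?ltr0Sn // subr_le0.
  exact: cvg_trans (near_eq_cvg H) (cvg_cst _).
have H : \forall n \near \oo, cst 0 n = hn a b n r.
  near=> n; rewrite /= /hn clamp_le0 // ge_min; apply/orP; right.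
  rewrite subr_le0 -ler_pdivrMr ?subr_gt0 // mul1r.
  by near: n; exact: ev_nat.
rewrite andbF /=.
exact: cvg_trans (near_eq_cvg H) (cvg_cst _).
Unshelve. all: by end_near.
Qed.
End C.
Section M.
Context {R : realType}.
Lemma int_bd (m : {finite_measure set (measurableTypeR R) -> \bar R})
  (D : set (measurableTypeR R)) (g : measurableTypeR R -> R) (C : R) :
  measurable D -> measurable_fun D g -> (forall r, `|g r| <= C) ->
  m.-integrable D (EFin \o g).
Proof.
move=> mD mg gC.
apply: (le_integrable mD _ _ (finite_measure_integrable_cst m C mD)).
  exact/measurable_EFinP.
by move=> r _ /=; rewrite lee_fin (le_trans (gC r)) // ler_norm.
Qed.
Lemma mcont (D : set (measurableTypeR R)) (g : R -> R) : measurable D -> continuous g ->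
  measurable_fun D (g : measurableTypeR R -> R).
Proof.
move=> mD cg; apply: (measurable_funS measurableT (@subsetT _ D)).
exact: continuous_measurable_fun.
Qed.
Lemma nuE (nu : @sgnmeas R) A : measurable A -> nu A = (jpos nu A - jneg nu A)%E.
Proof.
move=> mA; rewrite /jpos /jneg (jordan_decomp (hahnPN nu) mA) /cadd /cscale /=.
by rewrite cscaleN1.
Qed.
Lemma jneg0 (nu : @sgnmeas R) : (forall A, measurable A -> (0 <= nu A)%E) ->
  forall A, measurable A -> jneg nu A = 0%E.
Proof.
move=> h A mA; apply/le_anti; rewrite measure_ge0 andbT.
rewrite /jneg jordan_negE cjordan_negE /crestr0 mem_set //= /crestr.
rewrite leeNl oppe0; apply: h; apply: measurableI => //.
by case: (hahnPN nu) => _ [].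
Qed.
End M.
Arguments int_bd {R m D g C}.
Arguments mcont {R D g}.
Arguments Rint_cvg {R} m {D g f}.
Section Main.
Context {R : realType}.
Variables (tau T t : R) (x : R -> R) (nu : @sgnmeas R).
Hypothesis Htau : 0 < tau.
Hypothesis Ht0 : 0 <= t.
Hypothesis HtT : t <= T.
Hypothesis Hx : {within Itau tau T, continuous x}.
Hypothesis HM : in_M tau T nu.
Hypothesis Hsub : forall w : R -> R, {within Itau tau T, continuous w} ->
  sup [set w s | s in win tau t] - sup [set x s | s in win tau t]
    >= pairM tau T nu (fun s => w s - x s).

Local Notation D := (Itau tau T).
Local Notation W := (win tau t).
Local Notation M := (sup [set x s | s in win tau t]).
Local Notation jp := (jpos nu).
Local Notation jn := (jneg nu).

Let mD : measurable (D : set (measurableTypeR R)).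
Proof. exact: measurable_itv. Qed.

Let WD : W `<=` D.
Proof.
move=> s; rewrite /win /Itau /= !in_itv /= => /andP[h1 h2].
have h3 := Ht0; have h4 := HtT; have h5 := Htau; apply/andP; split; lra.
Qed.

Let Wt : W t.
Proof. have h3 := Ht0; have h5 := Htau; rewrite /win /= in_itv /=; apply/andP; split; lra. Qed.

Let Ssup : has_sup [set x s | s in W].
Proof.
apply: compact_has_sup; first by exists (x t), t.
apply: continuous_compact; last exact: segment_compact.
exact: continuous_subspaceW WD Hx.
Qed.

Let xleM s : W s -> x s <= M.
Proof. by move=> Ws; apply: (sup_upper_bound Ssup); exists s. Qed.

Let pairME g : pairM tau T nu g =
  \int[jp]_(s in D) g s - \int[jn]_(s in D) g s.
Proof. by []. Qed.

Let TL (g : R -> R) (c : R) : continuous g ->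
  (forall s, W s -> x s + g s <= M + c) -> pairM tau T nu g <= c.
Proof.
move=> cg hg.
have cw : {within D, continuous (fun s => x s + g s)}.
  have cg' : {within D, continuous g} := continuous_subspaceT cg.
  by move=> s; exact: (cvgD (Hx s) (cg' s)).
have := Hsub _ cw.
have -> : (fun s => x s + g s - x s) = g by apply/funext => s; rewrite addrAC subrr add0r.
have : sup [set x s + g s | s in W] <= M + c.
  apply: ge_sup; first by exists (x t + g t), t.
  by move=> _ [s Ws <-]; exact: hg.
have h1 := xleM t Wt.
lra.
Qed.


Let pairMZ (g : R -> R) (k C : R) : continuous g -> (forall r, `|g r| <= C) ->
  pairM tau T nu (fun s => k * g s) = k * pairM tau T nu g.
Proof.
move=> cg gC; rewrite !pairME.
rewrite !RintegralZl //; first by rewrite mulrBr.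
all: exact: (int_bd mD (mcont mD cg) gC).
Qed.

Let pos (h : R -> R) : continuous h -> (forall r, 0 <= h r) -> (forall r, h r <= 1) ->
  0 <= pairM tau T nu h.
Proof.
move=> ch h0 h1.
have cg : continuous (fun s => -1 * h s).
  by move=> r; apply: cvgM; [exact: cvg_cst | exact: ch].
have hb : forall s, W s -> x s + -1 * h s <= M + 0.
  move=> r Wr; have := xleM r Wr; have := h0 r; lra.
have := TL _ _ cg hb.
rewrite (@pairMZ h (-1) 1) //.
- lra.
- by move=> r; rewrite ger0_norm.
Qed.

Let Iv (a b : R) : (jn `]a, b]%classic <= jp `]a, b]%classic)%E.
Proof.
set J := `]a, b]%classic.
have mJ : measurable (J : set (measurableTypeR R)) by exact: measurable_itv.
have cv (m : {finite_measure set (measurableTypeR R) -> \bar R}) :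
    (fun n => \int[m]_(s in D) hn a b n s) @ \oo --> \int[m]_(s in D) \1_J s.
  apply: (Rint_cvg m mD (fun n => mcont mD (hn_cont a b n))).
  - exact: measurable_indic.
  - by move=> r; exact: hn_cvg.
  - by move=> n r; rewrite ger0_norm ?clamp_ge0 ?clamp_le1.
have cvP : (fun n => pairM tau T nu (hn a b n)) @ \oo -->
    \int[jp]_(s in D) \1_J s - \int[jn]_(s in D) \1_J s.
  by apply: cvgB; [exact: cv | exact: cv].
have L0 : 0 <= \int[jp]_(s in D) \1_J s - \int[jn]_(s in D) \1_J s.
  rewrite -(cvg_lim (@Rhausdorff R) cvP).
  apply: limr_ge; first exact: cvgP cvP.
  apply: nearW => n; apply: pos; first exact: hn_cont.
  - by move=> r; exact: clamp_ge0.
  - by move=> r; exact: clamp_le1.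
have Ie (m : {finite_measure set (measurableTypeR R) -> \bar R}) :
    \int[m]_(s in D) \1_J s = fine (m (J `&` D)).
  by rewrite /Rintegral integral_indic.
rewrite !Ie in L0.
have mJD : measurable (J `&` D : set (measurableTypeR R)) by exact: measurableI.
have h1 : (0 <= nu J)%E.
  rewrite (chargeDI _ mJ mD) (HM (J `\` D)) ?add0e.
  - rewrite nuE // sube_ge0; last by rewrite fin_num_measure.
    rewrite -[jn _]fineK ?fin_num_measure // -[jp _]fineK ?fin_num_measure //.
    by rewrite lee_fin; lra.
  - exact: measurableD.
  - by move=> r [].
by move: h1; rewrite nuE // sube_ge0 // fin_num_measure.
Qed.

Let nonneg A : measurable A -> (0 <= nu A)%E.
Proof.
move=> mA; rewrite nuE // sube_ge0; last by rewrite fin_num_measure.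
exact: le_ext Iv A mA.
Qed.

Let jn0 A : measurable A -> jn A = 0%E.
Proof. exact: jneg0 nu nonneg A. Qed.

Let pc c : pairM tau T nu (fun=> c) = c * fine (jp D).
Proof.
have fB : fine (jn D) = 0 by rewrite jn0.
by rewrite pairME !Rintegral_cst // fB mulr0 subr0.
Qed.

Let tv : tvnorm tau T nu = 1.
Proof.
have cc (k : R) : continuous (fun _ : R => k) by move=> r; exact: cvg_cst.
have hb1 : forall s, W s -> x s + 1 <= M + 1 by move=> s Ws; rewrite lerD2r xleM.
have hb2 : forall s, W s -> x s + -1 <= M + -1 by move=> s Ws; rewrite lerD2r xleM.
have u1 := TL _ _ (cc 1) hb1.
have u2 := TL _ _ (cc (-1)) hb2.
rewrite !pc in u1 u2.
rewrite /tvnorm; transitivity (fine (jp D)); last lra.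
congr fine; rewrite /varM /charge_variation /= -[RHS]adde0; congr (_ + _)%E.
exact: jn0.
Qed.


Let eps_eta s : ~ (W s /\ forall r, W r -> x r <= x s) ->
  exists e eta : R, [/\ 0 < e, 0 < eta &
    forall r, W r -> `|r - s| < 2 * e -> x r <= M - eta].
Proof.
move=> nA.
have [Ws|nWs] := pselect (W s).
  have [r0 [Wr0 xr0]] : exists r0, W r0 /\ x s < x r0.
    apply: contrapT => hno; apply: nA; split => // r Wr; rewrite leNgt.
    by apply/negP => hr; apply: hno; exists r.
  have Mr0 := xleM r0 Wr0.
  have eta0 : 0 < (M - x s) / 2 by lra.
  have cx := (@subspace_continuousP _ D _ x).1 Hx s (WD _ Ws).
  move/cvgrPdist_lt : cx => /(_ _ eta0).
  rewrite near_withinE => /nbhs_ballP [d d0 hd].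
  exists (d / 2), ((M - x s) / 2); split => //; first by rewrite divr_gt0.
  move=> r Wr rs.
  have brd : ball s d r by rewrite -ball_normE /ball_ /= distrC; lra.
  have := hd r brd (WD _ Wr).
  rewrite distrC => h.
  have := ler_norm (x r - x s); lra.
have h1 := Ht0; have h2 := Htau.
move: nWs; rewrite /win /= in_itv /= => nWs.
exists (if t - tau <= s then (s - t) / 2 else (t - tau - s) / 2), 1.
case: (leP (t - tau) s) => hs.
  have ts : t < s.
    by rewrite ltNge; apply/negP => h; apply: nWs; rewrite hs h.
  split => //; first lra.
  move=> r; rewrite in_itv /= => /andP[r1 r2] rs.
  have : s - r <= `|r - s| by rewrite distrC ler_norm.
  lra.
split => //; first lra.
move=> r; rewrite in_itv /= => /andP[r1 r2] rs.
have := ler_norm (r - s); lra.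
Qed.

Let supp : suppM nu `<=` argmaxw tau t x.
Proof.
move=> s Hs; apply: contrapT => nA.
have [e [eta [e0 eta0 He]]] := eps_eta s nA.
have oO : open (ball s e) := ball_open s e.
have := Hs _ oO (ballxx s e0).
have mO : measurable (ball s e : set (measurableTypeR R)) by exact: open_measurable.
have mOD : measurable (ball s e `&` D : set (measurableTypeR R)) by exact: measurableI.
have mODc : measurable (ball s e `\` D : set (measurableTypeR R)) by exact: measurableD.
have ct : continuous (tent s e) := tent_cont s e.
have tb r : `|tent s e r| <= 1 by rewrite ger0_norm ?clamp_ge0 ?clamp_le1.
have pt : pairM tau T nu (tent s e) <= 0.
  have cg : continuous (fun r => eta * tent s e r).
    by move=> r; apply: cvgM; [exact: cvg_cst | exact: ct].
  have hb : forall r, W r -> x r + eta * tent s e r <= M + 0.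
    move=> r Wr; have [rs|rs] := ltP (`|r - s|) (2 * e).
      have := He r Wr rs; have := ler_piMr (ltW eta0) (clamp_le1 (2 - `|r - s| / e)).
      rewrite /tent; lra.
    rewrite /tent clamp_le0 ?mulr0 ?addr0 ?xleM //.
    by rewrite subr_le0 ler_pdivlMr.
  have := TL _ _ cg hb.
  by rewrite (pairMZ _ eta _ ct tb) pmulr_rle0.
have In : \int[jn]_(r in D) tent s e r = 0.
  apply/le_anti; rewrite Rintegral_ge0 ?andbT; last by move=> r _; exact: clamp_ge0.
  have fB : fine (jn D) = 0 by rewrite jn0.
  apply: (@le_trans _ _ (\int[jn]_(r in D) (cst 1 r))).
    apply: le_Rintegral => //.
    - exact: int_bd mD (mcont mD ct) tb.
    - exact: finite_measure_integrable_cst.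
    - by move=> r _; exact: clamp_le1.
  by rewrite Rintegral_cst // fB mulr0.
have Ip : fine (jp (ball s e `&` D)) <= \int[jp]_(r in D) tent s e r.
  have -> : fine (jp (ball s e `&` D)) = \int[jp]_(r in D) \1_(ball s e) r.
    by rewrite /Rintegral integral_indic.
  apply: le_Rintegral => //.
  - apply: (int_bd mD (measurable_indic (D := D) mO)) => r.
    by rewrite ger0_norm // indicE; case: (_ \in _).
  - exact: int_bd mD (mcont mD ct) tb.
  - move=> r _; rewrite indicE; case: (pselect (ball s e r)) => [rO|nO].
      rewrite mem_set // /tent clamp_ge1 //.
      move: rO; rewrite -ball_normE /ball_ /= distrC => rO.
      have : `|r - s| / e <= 1 by rewrite ler_pdivrMr // mul1r ltW.
      lra.
    by rewrite memNset // clamp_ge0.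
have jpOD : jp (ball s e `&` D) = 0%E.
  have := pairME (tent s e); rewrite In subr0 => pE.
  rewrite pE in pt.
  have f0 := le_trans Ip pt.
  apply/eqP; rewrite eq_le measure_ge0 andbT.
  by rewrite -[jp _]fineK ?fin_num_measure // lee_fin.
have jpODc : jp (ball s e `\` D) = 0%E.
  have := nuE nu _ mODc; rewrite (HM (ball s e `\` D)) //.
  by rewrite jn0 // sube0 => ->.
have -> : varM nu (ball s e) = 0%E.
  rewrite /varM /charge_variation /=.
  have -> : jordan_neg (hahnPN nu) (ball s e) = 0%E by exact: jn0.
  rewrite adde0.
  have e1 : jp (ball s e) = (jp (ball s e `\` D) + jp (ball s e `&` D))%E.
    by apply: measureDI.
  transitivity (jp (ball s e)); first by [].
  by rewrite e1 jpOD jpODc adde0.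
by rewrite ltxx.
Qed.

Lemma main_det : [/\ nonnegM nu, tvnorm tau T nu = 1 & suppM nu `<=` argmaxw tau t x].
Proof. by split; [exact: nonneg | exact: tv | exact: supp]. Qed.

End Main.

Theorem corollary6p4 (R : realType) (n m : nat) (T tau : R)
    (F0 : 'rV[R]_n -> 'rV[R]_n -> 'rV[R]_n)
    (F1 : 'rV[R]_n -> 'rV[R]_n -> 'M[R]_(n, m))
    (phi : R -> 'rV[R]_n) (U : set 'rV[R]_m)
    (j : R -> 'rV[R]_n -> 'rV[R]_m -> R)
    (delta : R) (xs : R -> 'rV[R]_n) (us : R -> 'rV[R]_m)
    (xk : nat -> R -> 'rV[R]_n) (uk : nat -> R -> 'rV[R]_m)
    (sub : nat -> nat) (mu : R -> 'I_n -> @sgnmeas R) :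
  (0 < n)%N -> (0 < m)%N -> 0 < T -> 0 < tau ->
  glob_lipschitz (fun p : 'rV[R]_n * 'rV[R]_n => F0 p.1 p.2) ->
  C1 (fun p : 'rV[R]_n * 'rV[R]_n => F0 p.1 p.2) ->
  glob_lipschitz (fun p : 'rV[R]_n * 'rV[R]_n => F1 p.1 p.2) ->
  C1 (fun p : 'rV[R]_n * 'rV[R]_n => F1 p.1 p.2) ->
  {within Itau tau 0, continuous phi} ->
  U_assumptions U ->
  j_assumptions T j ->
  0 < delta ->
  local_sol_P T tau F0 F1 phi U j delta xs us ->
  (forall k, (0 < k)%N -> global_sol_Pk T tau F0 F1 phi U j delta us k (xk k) (uk k)) ->
  (forall p, (sub p < sub p.+1)%N) -> (0 < sub 0)%N ->
  Linf_w tau T mu ->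
  wstar_limit tau T xk sub mu ->
  {ae @lebesgue_measure R, forall t, II T t -> in_subdiff_max tau T t xs mu} ->
  {ae @lebesgue_measure R, forall t, II T t ->
     forall i : 'I_n,
       [/\ nonnegM (mu t i),
           tvnorm tau T (mu t i) = 1 &
           suppM (mu t i) `<=` argmaxw tau t (fun s => xs s ord0 i)]}.
Proof.
move=> _ _ _ tau0 _ _ _ _ _ _ _ _ [_ [cxs _ _ _] _] _ _ _ [HinM _ _] _ Hae.
have FF := ae_filter_ringOfSetsType (@lebesgue_measure R).
apply: (@filterS _ _ FF _ _ _ Hae) => t Hsub IIt i.
have [t0 tT] : 0 <= t /\ t <= T.
  by move: IIt; rewrite /II /= in_itv /= => /andP[].
apply: (@main_det R tau T t (fun s => xs s ord0 i) (mu t i) tau0 t0 tT _ (HinM t i IIt) (Hsub IIt i)).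
move=> s.
have := continuous_comp (cxs s) (@coord_continuous _ _ _ ord0 i (xs s)).
exact.
Qed.
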